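(* Let $\Gamma=(V,E)$ be a graph and for each $v\in V$ let $M_v$ be a monoid. If every $M_v$ is right cancellative (respectively left cancellative, respectively cancellative), then the graph product $\Gamma_{v\in V}M_v$ is right cancellative (respectively left cancellative, respectively cancellative).
   Context: A graph $\Gamma=(V,E)$ consists of a set $V$ of vertices and an irreflexive symmetric relation $E\subseteq V\times V$ (edges); $u,v$ are adjacent if $(u,v)\in E$. For monoids $M_v$ ($v\in V$, taken pairwise disjoint), the graph product $\Gamma_{v\in V}M_v$ is the quotient of the free product of the $M_v$ by the congruence generated by all pairs $(mn,nm)$ with $m\in M_u$, $n\in M_v$ and $(u,v)\in E$. Equivalently, if $M_v$ has presentation $\langle A_v\mid R_v\rangle$, the graph product has presentation $\langle \bigcup_v A_v \mid \bigcup_v R_v \cup \{ab=ba : a\in A_u, b\in A_v, (u,v)\in E\}\rangle$. *)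

(* Defs.v *)
(* Graph products of monoids, defined by the standard
   presentation: generators = all elements of all M_v (disjoint union,
   realised as a sigma type), relations = multiplication tables of the M_v,
   identification of each 1_v with the empty word, and commutation of
   elements of adjacent vertex monoids. *)
From Stdlib Require Import List.
Import ListNotations.
Set Implicit Arguments.

Record monoid := Monoid {
  mcar :> Type;
  mop : mcar -> mcar -> mcar;
  munit : mcar;
  mopA : forall a b c, mop a (mop b c) = mop (mop a b) c;
  mop1l : forall a, mop munit a = a;
  mop1r : forall a, mop a munit = a
}.
Arguments mop {m} _ _.

Definition left_cancellative (M : monoid) : Prop :=
  forall a b c : M, mop c a = mop c b -> a = b.
Definition right_cancellative (M : monoid) : Prop :=
  forall a b c : M, mop a c = mop b c -> a = b.
Definition cancellative (M : monoid) : Prop :=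
  left_cancellative M /\ right_cancellative M.

Section GraphProduct.
Variables (V : Type) (E : V -> V -> Prop) (M : V -> monoid).

Definition gp_letter := {v : V & mcar (M v)}.
Definition gp_word := list gp_letter.

Inductive gp_rel : gp_word -> gp_word -> Prop :=
| gp_rel_mul (v : V) (a b : M v) :
    gp_rel [existT _ v a; existT _ v b] [existT _ v (mop a b)]
| gp_rel_unit (v : V) :
    gp_rel [existT _ v (munit (M v))] []
| gp_rel_comm (u v : V) (m : M u) (n : M v) :
    E u v -> gp_rel [existT _ u m; existT _ v n] [existT _ v n; existT _ u m].

Inductive gp_cong : gp_word -> gp_word -> Prop :=
| gp_cong_base p s w1 w2 : gp_rel w1 w2 -> gp_cong (p ++ w1 ++ s) (p ++ w2 ++ s)
| gp_cong_refl w : gp_cong w w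
| gp_cong_sym w1 w2 : gp_cong w1 w2 -> gp_cong w2 w1
| gp_cong_trans w1 w2 w3 : gp_cong w1 w2 -> gp_cong w2 w3 -> gp_cong w1 w3.

(* The graph product is the quotient gp_word / gp_cong with multiplication
   induced by concatenation; cancellativity is stated on representatives. *)
Definition gp_left_cancellative : Prop :=
  forall x y z : gp_word, gp_cong (z ++ x) (z ++ y) -> gp_cong x y.
Definition gp_right_cancellative : Prop :=
  forall x y z : gp_word, gp_cong (x ++ z) (y ++ z) -> gp_cong x y.
Definition gp_cancellative : Prop :=
  gp_left_cancellative /\ gp_right_cancellative.

End GraphProduct.

(* Main.v *)
Require Import Defs.
From Stdlib Require Import List ClassicalEpsilon Eqdep Relations.
Import ListNotations.
Set Implicit Arguments.

Section LC.
Variables (V : Type) (E : V -> V -> Prop) (M : V -> monoid).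
Hypothesis E_irrefl : forall v, ~ E v v.
Hypothesis E_sym : forall u v, E u v -> E v u.

Notation letter := (gp_letter M).
Notation word := (gp_word M).

Definition dec (P : Prop) : {P} + {~ P} := excluded_middle_informative P.

Fixpoint find (v : V) (w : word) : option (word * letter * word) :=
  match w with
  | [] => None
  | a :: w' => if dec (projT1 a = v) then Some ([], a, w')
     else if dec (E v (projT1 a)) then
       match find v w' with Some (p, z, q) => Some (a :: p, z, q) | None => None end
     else None
  end.

Definition passes (v : V) (p : word) := Forall (fun a => projT1 a <> v /\ E v (projT1 a)) p.

Lemma find_spec v w p z q : find v w = Some (p, z, q) ->
  w = p ++ z :: q /\ passes v p /\ projT1 z = v.
Proof.
  revert p; induction w as [|a w IH]; intros p; simpl; [discriminate|].
  destruct (dec (projT1 a = v)).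
  - intros H; inversion H; subst; simpl; repeat split; auto. constructor.
  - destruct (dec (E v (projT1 a))); [|discriminate].
    destruct (find v w) as [[[p' z'] q']|] eqn:Hf; [|discriminate].
    intros H; inversion H; subst.
    destruct (IH p' eq_refl) as [H1 [H2 H3]]; subst.
    repeat split; auto. constructor; auto.
Qed.

Lemma find_pass_Some v A l p z q : passes v A -> find v l = Some (p, z, q) ->
  find v (A ++ l) = Some (A ++ p, z, q).
Proof.
  induction 1 as [|a A [H1 H2] HA IH]; intros Hl; simpl; auto.
  destruct (dec (projT1 a = v)); [contradiction|].
  destruct (dec (E v (projT1 a))); [|contradiction].
  rewrite IH; auto.
Qed.

Lemma find_pass_None v A l : passes v A -> find v l = None -> find v (A ++ l) = None.
Proof.
  induction 1 as [|a A [H1 H2] HA IH]; intros Hl; simpl; auto.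
  destruct (dec (projT1 a = v)); [contradiction|].
  destruct (dec (E v (projT1 a))); [|contradiction].
  rewrite IH; auto.
Qed.

Lemma find_tri v A :
  (exists p z q, find v A = Some (p, z, q) /\ forall l, find v (A ++ l) = Some (p, z, q ++ l))
  \/ (forall l, find v (A ++ l) = None) \/ passes v A.
Proof.
  induction A as [|a A IH]; simpl.
  - right; right; constructor.
  - destruct (dec (projT1 a = v)).
    + left; exists [], a, A; split; auto.
    + destruct (dec (E v (projT1 a))).
      * destruct IH as [[p [z [q [H1 H2]]]]|[H|H]].
        -- left; exists (a :: p), z, q; rewrite H1; split; auto.
           intros l; rewrite H2; auto.
        -- right; left; intros l; rewrite H; auto.
        -- right; right; constructor; auto.
      * right; left; auto.
Qed.

Lemma find_transp u p z q : projT1 z <> u -> E u (projT1 z) ->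
  (find u (p ++ z :: q) = None <-> find u (p ++ q) = None).
Proof.
  intros H1 H2; induction p as [|a p IH]; simpl.
  - destruct (dec (projT1 z = u)); [contradiction|].
    destruct (dec (E u (projT1 z))); [|contradiction].
    destruct (find u q) as [[[? ?] ?]|]; split; congruence.
  - destruct (dec (projT1 a = u)); [split; congruence|].
    destruct (dec (E u (projT1 a))); [|tauto].
    destruct (find u (p ++ z :: q)) as [[[? ?] ?]|];
    destruct (find u (p ++ q)) as [[[? ?] ?]|]; intuition congruence.
Qed.

Definition nonunit (a : letter) := projT2 a <> munit (M (projT1 a)).

Fixpoint reduced (w : word) : Prop :=
  match w with
  | [] => True
  | a :: w' => nonunit a /\ find (projT1 a) w' = None /\ reduced w'
  end.

Definition ol (o : option letter) : word := match o with Some z => [z] | None => [] end.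

Definition F (v : V) (h : option letter -> option letter) (w : word) : word :=
  match find v w with
  | Some (p, z, q) => p ++ ol (h (Some z)) ++ q
  | None => ol (h None) ++ w
  end.

Definition goodo (v : V) (o : option letter) :=
  match o with Some z => projT1 z = v /\ nonunit z | None => True end.
Definition goodh (v : V) (h : option letter -> option letter) := forall o, goodo v (h o).

Lemma reduced_app p q : reduced (p ++ q) -> reduced q.
Proof. induction p; simpl; tauto. Qed.

Lemma reduced_mid p z q : reduced (p ++ z :: q) -> nonunit z /\ find (projT1 z) q = None /\ reduced q.
Proof. intros H; apply reduced_app in H; exact H. Qed.

Lemma red_replace v p z q o : passes v p -> reduced (p ++ z :: q) -> projT1 z = v ->
  goodo v o -> reduced (p ++ ol o ++ q).
Proof.
  induction 1 as [|a p [Ha1 Ha2] Hp IH]; intros Hr Hz Ho; simpl in *.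
  - destruct Hr as [_ [Hf Hq]]. destruct o as [z'|]; simpl; auto.
    destruct Ho as [Ho1 Ho2]; repeat split; auto. congruence.
  - destruct Hr as [Hn [Hf Hr]]; repeat split; auto.
    assert (Hv : projT1 z <> projT1 a) by congruence.
    assert (He : E (projT1 a) (projT1 z)) by (rewrite Hz; auto).
    apply (proj1 (@find_transp (projT1 a) p z q Hv He)) in Hf.
    destruct o as [z'|]; simpl; auto.
    destruct Ho as [Ho1 _].
    assert (Hv' : projT1 z' <> projT1 a) by congruence.
    assert (He' : E (projT1 a) (projT1 z')) by (rewrite Ho1; auto).
    apply (proj2 (@find_transp (projT1 a) p z' q Hv' He')); auto.
Qed.

Lemma F_red v h w : goodh v h -> reduced w -> reduced (F v h w).
Proof.
  intros Hh Hw; unfold F.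
  destruct (find v w) as [[[p z] q]|] eqn:Hf.
  - destruct (find_spec _ _ Hf) as [-> [Hp Hz]].
    eapply red_replace; eauto.
  - specialize (Hh None); destruct (h None) as [z|]; simpl in *; auto.
    destruct Hh as [H1 H2]; rewrite H1; auto.
Qed.

Inductive sh : word -> word -> Prop :=
| sh_intro (A : word) (x y : letter) (B : word) : E (projT1 x) (projT1 y) -> sh (A ++ x :: y :: B) (A ++ y :: x :: B).

Definition shc := clos_refl_sym_trans word sh.

Lemma shc_swap A x y B : E (projT1 x) (projT1 y) -> shc (A ++ x :: y :: B) (A ++ y :: x :: B).
Proof. intros; apply rst_step; constructor; auto. Qed.

Lemma shc_sym w1 w2 : shc w1 w2 -> shc w2 w1.
Proof. apply rst_sym. Qed.
Lemma shc_trans w1 w2 w3 : shc w1 w2 -> shc w2 w3 -> shc w1 w3.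
Proof. apply rst_trans. Qed.
Lemma shc_refl w : shc w w.
Proof. apply rst_refl. Qed.

Lemma shc_swap2 A C x y B : E (projT1 x) (projT1 y) -> shc (A ++ C ++ x :: y :: B) (A ++ C ++ y :: x :: B).
Proof. intros; rewrite !app_assoc; apply shc_swap; auto. Qed.
Lemma shc_swap3 A D C x y B : E (projT1 x) (projT1 y) -> shc (A ++ D ++ C ++ x :: y :: B) (A ++ D ++ C ++ y :: x :: B).
Proof. intros; rewrite !app_assoc; apply shc_swap; auto. Qed.

Lemma shc_ol_swap A o x B : (forall z, o = Some z -> E (projT1 z) (projT1 x)) ->
  shc (A ++ ol o ++ x :: B) (A ++ x :: ol o ++ B).
Proof.
  intros H; destruct o as [z|]; simpl; [|apply shc_refl].
  apply shc_swap; auto.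
Qed.

Lemma F_swap v h (A : word) (x y : letter) (B : word) : goodh v h -> E (projT1 x) (projT1 y) ->
  shc (F v h (A ++ x :: y :: B)) (F v h (A ++ y :: x :: B)).
Proof.
  intros Hh Hxy; unfold F.
  destruct (find_tri v A) as [[p [z [q [_ H]]]]|[H|H]].
  - rewrite !H. apply shc_swap3; auto.
  - rewrite !H. apply shc_swap2; auto.
  - assert (Hyx : E (projT1 y) (projT1 x)) by auto.
    destruct (dec (projT1 x = v)) as [ex|nx].
    + assert (ny : projT1 y <> v) by (intro Hy; apply (@E_irrefl v); rewrite <- ex at 1; rewrite <- Hy; exact Hxy).
      assert (Ey : E v (projT1 y)) by congruence.
      assert (F1 : find v (x :: y :: B) = Some ([], x, y :: B)) by
        (simpl; destruct (dec (projT1 x = v)); [auto|contradiction]).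
      assert (F2 : find v (y :: x :: B) = Some ([y], x, B)) by
        (simpl; destruct (dec (projT1 y = v)); [contradiction|];
         destruct (dec (E v (projT1 y))); [|contradiction];
         destruct (dec (projT1 x = v)); [auto|contradiction]).
      rewrite (@find_pass_Some v A _ _ _ _ H F1), (@find_pass_Some v A _ _ _ _ H F2).
      rewrite ?app_nil_r, <- ?(app_assoc A [y]), <- ?(app_assoc A [x]). simpl.
      apply shc_ol_swap. intros z Hz. specialize (Hh (Some x)); rewrite Hz in Hh.
      destruct Hh as [Hh _]; congruence.
    + destruct (dec (projT1 y = v)) as [ey|ny].
      * assert (Ex : E v (projT1 x)) by (subst; auto).
        assert (F1 : find v (y :: x :: B) = Some ([], y, x :: B)) by
          (simpl; destruct (dec (projT1 y = v)); [auto|contradiction]).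
        assert (F2 : find v (x :: y :: B) = Some ([x], y, B)) by
          (simpl; destruct (dec (projT1 x = v)); [contradiction|];
           destruct (dec (E v (projT1 x))); [|contradiction];
           destruct (dec (projT1 y = v)); [auto|contradiction]).
        rewrite (@find_pass_Some v A _ _ _ _ H F1), (@find_pass_Some v A _ _ _ _ H F2).
        rewrite ?app_nil_r, <- ?(app_assoc A [y]), <- ?(app_assoc A [x]). simpl.
        apply shc_sym, shc_ol_swap. intros z Hz. specialize (Hh (Some y)); rewrite Hz in Hh.
        destruct Hh as [Hh _]; congruence.
      * destruct (dec (E v (projT1 x))) as [Ex|Ex]; [destruct (dec (E v (projT1 y))) as [Ey|Ey]|].
        -- destruct (find v B) as [[[p z] q]|] eqn:HB.
           ++ assert (F1 : find v (x :: y :: B) = Some (x :: y :: p, z, q)) by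
                (simpl; destruct (dec (projT1 x = v)); [contradiction|];
                 destruct (dec (E v (projT1 x))); [|contradiction];
                 destruct (dec (projT1 y = v)); [contradiction|];
                 destruct (dec (E v (projT1 y))); [|contradiction]; rewrite HB; auto).
              assert (F2 : find v (y :: x :: B) = Some (y :: x :: p, z, q)) by
                (simpl; destruct (dec (projT1 y = v)); [contradiction|];
                 destruct (dec (E v (projT1 y))); [|contradiction];
                 destruct (dec (projT1 x = v)); [contradiction|];
                 destruct (dec (E v (projT1 x))); [|contradiction]; rewrite HB; auto).
              rewrite (@find_pass_Some v A _ _ _ _ H F1), (@find_pass_Some v A _ _ _ _ H F2).
              rewrite <- !app_assoc. simpl. apply shc_swap; auto.
           ++ assert (F1 : find v (x :: y :: B) = None) by
                (simpl; destruct (dec (projT1 x = v)); [contradiction|];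
                 destruct (dec (E v (projT1 x))); [|contradiction];
                 destruct (dec (projT1 y = v)); [contradiction|];
                 destruct (dec (E v (projT1 y))); [|contradiction]; rewrite HB; auto).
              assert (F2 : find v (y :: x :: B) = None) by
                (simpl; destruct (dec (projT1 y = v)); [contradiction|];
                 destruct (dec (E v (projT1 y))); [|contradiction];
                 destruct (dec (projT1 x = v)); [contradiction|];
                 destruct (dec (E v (projT1 x))); [|contradiction]; rewrite HB; auto).
              rewrite (@find_pass_None v A _ H F1), (@find_pass_None v A _ H F2).
              apply shc_swap2; auto.
        -- assert (F1 : find v (x :: y :: B) = None) by
             (simpl; destruct (dec (projT1 x = v)); [contradiction|];
              destruct (dec (E v (projT1 x))); [|contradiction];
              destruct (dec (projT1 y = v)); [contradiction|];
              destruct (dec (E v (projT1 y))); [contradiction|]; auto).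
           assert (F2 : find v (y :: x :: B) = None) by
             (simpl; destruct (dec (projT1 y = v)); [contradiction|];
              destruct (dec (E v (projT1 y))); [contradiction|]; auto).
           rewrite (@find_pass_None v A _ H F1), (@find_pass_None v A _ H F2).
           apply shc_swap2; auto.
        -- assert (F1 : find v (x :: y :: B) = None) by
             (simpl; destruct (dec (projT1 x = v)); [contradiction|];
              destruct (dec (E v (projT1 x))); [contradiction|]; auto).
           assert (F2 : find v (y :: x :: B) = None).
           { simpl; destruct (dec (projT1 y = v)); [contradiction|].
             destruct (dec (E v (projT1 y))); [|auto].
             destruct (dec (projT1 x = v)); [contradiction|].
             destruct (dec (E v (projT1 x))); [contradiction|]; auto. }
           rewrite (@find_pass_None v A _ H F1), (@find_pass_None v A _ H F2).
           apply shc_swap2; auto.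
Qed.

Lemma F_resp v h w1 w2 : goodh v h -> shc w1 w2 -> shc (F v h w1) (F v h w2).
Proof.
  intros Hh; induction 1.
  - destruct H; apply F_swap; auto.
  - apply shc_refl.
  - apply shc_sym; auto.
  - eapply shc_trans; eauto.
Qed.


Definition cast (v : V) (z : letter) : M v :=
  match dec (projT1 z = v) with
  | left e => eq_rect (projT1 z) (fun u => mcar (M u)) (projT2 z) v e
  | right _ => munit (M v)
  end.

Lemma cast_eq v (m : M v) : cast v (existT _ v m) = m.
Proof.
  unfold cast; destruct (dec _) as [e|n]; [|simpl in n; contradiction n; auto].
  simpl in e. rewrite (Eqdep.EqdepTheory.UIP_refl _ _ e). reflexivity.
Qed.

Definition mkl (v : V) (m : M v) : option letter :=
  if dec (m = munit (M v)) then None else Some (existT _ v m).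

Definition hact (v : V) (c : M v) (o : option letter) : option letter :=
  match o with Some z => mkl v (mop c (cast v z)) | None => mkl v c end.

Definition act (a : letter) (r : word) : word := F (projT1 a) (hact (projT1 a) (projT2 a)) r.

Lemma good_mkl v m : goodo v (mkl v m).
Proof. unfold mkl; destruct (dec _); simpl; auto. Qed.

Lemma good_hact v c : goodh v (hact v c).
Proof. intros [z|]; apply good_mkl. Qed.

Lemma act_red a r : reduced r -> reduced (act a r).
Proof. intros; apply F_red; auto; apply good_hact. Qed.

Lemma cong_app (P S w w' : word) : gp_cong E w w' -> gp_cong E (P ++ w ++ S) (P ++ w' ++ S).
Proof.
  induction 1.
  - replace (P ++ (p ++ w1 ++ s) ++ S) with ((P ++ p) ++ w1 ++ (s ++ S)) by (rewrite <- !app_assoc; auto).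
    replace (P ++ (p ++ w2 ++ s) ++ S) with ((P ++ p) ++ w2 ++ (s ++ S)) by (rewrite <- !app_assoc; auto).
    apply gp_cong_base; auto.
  - apply gp_cong_refl.
  - apply gp_cong_sym; auto.
  - eapply gp_cong_trans; eauto.
Qed.

Lemma cong_cons (a : letter) (w w' : word) : gp_cong E w w' -> gp_cong E (a :: w) (a :: w').
Proof. intros H; apply (cong_app [a] [] ) in H; rewrite !app_nil_r in H; exact H. Qed.

Lemma comm_pass v (c : M v) (p X : word) : passes v p ->
  gp_cong E (existT _ v c :: p ++ X) (p ++ existT _ v c :: X).
Proof.
  induction 1 as [|a p [H1 H2] Hp IH]; simpl; [apply gp_cong_refl|].
  eapply gp_cong_trans; [|apply cong_cons; exact IH].
  destruct a as [u m]; simpl in *.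
  apply (gp_cong_base [] (p ++ X) (gp_rel_comm E M v u c m H2)).
Qed.

Lemma act_cong a r : reduced r -> gp_cong E (a :: r) (act a r).
Proof.
  intros Hr; destruct a as [v c]; unfold act, F; simpl.
  destruct (find v r) as [[[p z] q]|] eqn:Hf.
  - destruct (find_spec _ _ Hf) as [-> [Hp Hz]].
    destruct z as [w m]; simpl in Hz; subst w.
    eapply gp_cong_trans; [apply comm_pass; exact Hp|].
    simpl; rewrite cast_eq.
    eapply gp_cong_trans; [apply (gp_cong_base p q (gp_rel_mul E M v c m))|].
    unfold mkl; destruct (dec _) as [e|n]; simpl.
    + rewrite e. apply (gp_cong_base p q (gp_rel_unit E M v)).
    + apply gp_cong_refl.
  - unfold mkl; destruct (dec _) as [e|n]; simpl.
    + subst. apply (gp_cong_base [] r (gp_rel_unit E M v)).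
    + apply gp_cong_refl.
Qed.

Lemma sh_cong w w' : shc w w' -> gp_cong E w w'.
Proof.
  induction 1.
  - destruct H as [A x y B Hxy]. destruct x as [u m]; destruct y as [v n].
    apply (gp_cong_base A B (gp_rel_comm E M u v m n Hxy)).
  - apply gp_cong_refl.
  - apply gp_cong_sym; auto.
  - eapply gp_cong_trans; eauto.
Qed.

Lemma find_head v (z : letter) rest : projT1 z = v -> find v (z :: rest) = Some ([], z, rest).
Proof. intros H; simpl; destruct (dec _); [auto|contradiction]. Qed.

Lemma passes_ol u v o : goodo v o -> v <> u -> E u v -> passes u (ol o).
Proof.
  intros Ho H1 H2; destruct o as [z|]; simpl; constructor; auto.
  destruct Ho as [Ho _]; rewrite Ho; auto.
Qed.

Lemma shc_app (P w w' : word) : shc w w' -> shc (P ++ w) (P ++ w').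
Proof.
  induction 1.
  - destruct H as [A x y B Hxy]. rewrite !app_assoc. apply shc_swap; auto.
  - apply shc_refl.
  - apply shc_sym; auto.
  - eapply shc_trans; eauto.
Qed.

Lemma ol_pass v o (p q : word) : goodo v o -> passes v p -> shc (ol o ++ p ++ q) (p ++ ol o ++ q).
Proof.
  intros Ho Hp; destruct o as [z|]; simpl; [|apply shc_refl].
  destruct Ho as [Hz _].
  induction Hp as [|a p [H1 H2] Hp IH]; simpl; [apply shc_refl|].
  eapply shc_trans; [apply (shc_swap [] z a (p ++ q)); rewrite Hz; auto|].
  simpl. apply (shc_app [a]) in IH. exact IH.
Qed.


Lemma ol_comm u v o1 o2 (r : word) : goodo u o1 -> goodo v o2 -> E u v ->
  shc (ol o1 ++ ol o2 ++ r) (ol o2 ++ ol o1 ++ r).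
Proof.
  intros H1 H2 Huv; destruct o1 as [z1|], o2 as [z2|]; simpl; try apply shc_refl.
  destruct H1 as [H1 _], H2 as [H2 _].
  apply (shc_swap [] z1 z2 r); rewrite H1, H2; auto.
Qed.

Lemma find_none_ol u v o (p q : word) (z : letter) : goodo u o -> u <> v -> E v u -> projT1 z = u ->
  find v (p ++ z :: q) = None -> find v (p ++ ol o ++ q) = None.
Proof.
  intros Ho Huv Hvu Hz Hf.
  assert (Hf' : find v (p ++ q) = None).
  { apply (proj1 (@find_transp v p z q ltac:(congruence) ltac:(rewrite Hz; auto))); auto. }
  destruct o as [z'|]; simpl; auto.
  destruct Ho as [Ho _].
  apply (proj2 (@find_transp v p z' q ltac:(congruence) ltac:(rewrite Ho; auto))); auto.
Qed.

Lemma comm_L1 u v h k (r : word) : goodh u h -> goodh v k -> u <> v -> E u v ->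
  find v r = None -> shc (F u h (F v k r)) (F v k (F u h r)).
Proof.
  intros Hh Hk Huv Euv Hv.
  assert (Evu : E v u) by auto.
  unfold F at 2. rewrite Hv.
  assert (Pk : passes u (ol (k None))) by (apply (passes_ol (v:=v)); auto).
  unfold F.
  destruct (find u r) as [[[p z] q]|] eqn:Hu.
  - rewrite (@find_pass_Some u _ _ _ _ _ Pk Hu).
    destruct (find_spec _ _ Hu) as [Hr [Hp Hz]].
    rewrite Hr in Hv.
    rewrite (@find_none_ol u v _ p q z (Hh _) Huv Evu Hz Hv).
    rewrite <- !app_assoc. apply shc_refl.
  - rewrite (@find_pass_None u _ _ Pk Hu).
    rewrite (@find_pass_None v _ _ (@passes_ol v u _ (Hh None) Huv Evu) Hv).
    apply ol_comm with u v; auto.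
Qed.

Lemma comm_L2 u v h k (r Pu Mid Qv : word) (zu zv : letter) :
  goodh u h -> goodh v k -> u <> v -> E u v ->
  find u r = Some (Pu, zu, Mid ++ zv :: Qv) -> find v r = Some (Pu ++ zu :: Mid, zv, Qv) ->
  F u h (F v k r) = F v k (F u h r).
Proof.
  intros Hh Hk Huv Euv Hu Hv.
  assert (Evu : E v u) by auto.
  destruct (find_spec _ _ Hu) as [Hr [Hpu Hzu]].
  destruct (find_spec _ _ Hv) as [_ [Hpv Hzv]].
  unfold F at 2 4. rewrite Hu, Hv.
  unfold F.
  rewrite <- app_assoc. simpl.
  rewrite (@find_pass_Some u Pu _ [] zu (Mid ++ ol (k (Some zv)) ++ Qv) Hpu (@find_head u zu _ Hzu)).
  apply Forall_app in Hpv. destruct Hpv as [Hpv1 Hpv2]. pose proof (Forall_inv Hpv2) as Hx; pose proof (Forall_inv_tail Hpv2) as HMid.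
  assert (Hpass : passes v (Pu ++ ol (h (Some zu)) ++ Mid)).
  { apply Forall_app; split; auto. apply Forall_app; split; auto.
    apply (@passes_ol v u _ (Hh _)); auto. }
  replace (Pu ++ ol (h (Some zu)) ++ Mid ++ zv :: Qv) with ((Pu ++ ol (h (Some zu)) ++ Mid) ++ zv :: Qv) by (rewrite <- !app_assoc; reflexivity).
  rewrite (@find_pass_Some v _ _ [] zv Qv Hpass (@find_head v zv Qv Hzv)).
  rewrite !app_nil_r, <- !app_assoc. reflexivity.
Qed.

Lemma comm_F u v h k (r : word) : goodh u h -> goodh v k -> u <> v -> E u v ->
  shc (F u h (F v k r)) (F v k (F u h r)).
Proof.
  intros Hh Hk Huv Euv.
  assert (Evu : E v u) by auto.
  destruct (find v r) as [[[p z] q]|] eqn:Hv; [|apply comm_L1; auto].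
  destruct (find u r) as [[[p' z'] q']|] eqn:Hu; [|apply shc_sym, comm_L1; auto].
  destruct (find_spec _ _ Hv) as [Hr [_ Hz]].
  destruct (find_spec _ _ Hu) as [Hr' [_ Hz']].
  rewrite Hr in Hr'.
  destruct (app_eq_app _ _ _ _ Hr') as [l [[H1 H2]|[H1 H2]]].
  - destruct l as [|a l]; simpl in H2.
    + rewrite app_nil_r in H1; subst. inversion H2; subst. congruence.
    + injection H2 as Ha Hq.
      rewrite Hq in Hu. rewrite H1, <- Ha in Hv.
      rewrite (@comm_L2 u v h k r _ _ _ _ _ Hh Hk Huv Euv Hu Hv). apply shc_refl.
  - destruct l as [|a l]; simpl in H2.
    + rewrite app_nil_r in H1; subst. inversion H2; subst. congruence.
    + injection H2 as Ha Hq.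
      rewrite Hq in Hv. rewrite H1, <- Ha in Hu.
      rewrite (@comm_L2 v u k h r _ _ _ _ _ Hk Hh (not_eq_sym Huv) Evu Hv Hu). apply shc_refl.
Qed.


Lemma find_after_red v (p q : word) (z : letter) : passes v p -> projT1 z = v ->
  reduced (p ++ z :: q) -> find v (p ++ q) = None.
Proof.
  intros Hp Hz Hr. destruct (reduced_mid _ _ _ Hr) as [_ [Hf _]].
  rewrite Hz in Hf. apply find_pass_None; auto.
Qed.

Lemma act_mul v (a b : M v) (r : word) : reduced r ->
  shc (act (existT _ v a) (act (existT _ v b) r)) (act (existT _ v (mop a b)) r).
Proof.
  intros Hr; unfold act; simpl.
  unfold F at 2 3.
  destruct (find v r) as [[[p z] q]|] eqn:Hf.
  - destruct (find_spec _ _ Hf) as [Hrr [Hp Hz]].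
    destruct z as [w m]; simpl in Hz; subst w.
    simpl. rewrite !cast_eq. rewrite <- mopA.
    unfold mkl at 1. destruct (dec (mop b m = munit (M v))) as [e|n].
    + rewrite e, mop1r. simpl.
      unfold F. rewrite Hrr in Hr.
      rewrite (@find_after_red v p q (existT _ v m) Hp eq_refl Hr). simpl.
      apply ol_pass with v; auto. apply good_mkl.
    + simpl. unfold F.
      rewrite (@find_pass_Some v p _ [] _ q Hp (@find_head v (existT _ v (mop b m)) q eq_refl)).
      simpl. rewrite app_nil_r, cast_eq. apply shc_refl.
  - simpl. unfold mkl at 1. destruct (dec (b = munit (M v))) as [e|n].
    + subst b. rewrite mop1r. simpl. unfold F. rewrite Hf. apply shc_refl.
    + simpl. unfold F. rewrite (@find_head v (existT _ v b) r eq_refl). simpl.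
      rewrite cast_eq. apply shc_refl.
Qed.

Lemma act_unit v (r : word) : reduced r -> act (existT _ v (munit (M v))) r = r.
Proof.
  intros Hr; unfold act, F; simpl.
  destruct (find v r) as [[[p z] q]|] eqn:Hf.
  - destruct (find_spec _ _ Hf) as [Hrr [Hp Hz]].
    destruct z as [w m]; simpl in Hz; subst w.
    rewrite Hrr in Hr. destruct (reduced_mid _ _ _ Hr) as [Hn _].
    simpl. rewrite cast_eq, mop1l. unfold mkl.
    destruct (dec _); [contradiction|]. simpl. auto.
  - simpl. unfold mkl. destruct (dec _) as [_|n]; [auto|contradiction n; auto].
Qed.

Lemma act_comm u v (m : M u) (n : M v) (r : word) : E u v ->
  shc (act (existT _ u m) (act (existT _ v n) r)) (act (existT _ v n) (act (existT _ u m) r)).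
Proof.
  intros Euv; unfold act; simpl.
  apply comm_F; try apply good_hact; auto.
  intro e; subst; apply (@E_irrefl v); auto.
Qed.

Definition phi (r : word) (w : word) : word := fold_right act r w.

Lemma phi_red r w : reduced r -> reduced (phi r w).
Proof. intros Hr; induction w; simpl; auto. apply act_red; auto. Qed.

Lemma phi_resp w r1 r2 : shc r1 r2 -> shc (phi r1 w) (phi r2 w).
Proof.
  intros H; induction w as [|a w IH]; simpl; auto.
  unfold act. apply F_resp; auto. apply good_hact.
Qed.

Lemma rel_sound w1 w2 r : gp_rel E w1 w2 -> reduced r -> shc (phi r w1) (phi r w2).
Proof.
  intros H Hr; destruct H; simpl.
  - apply act_mul; auto.
  - rewrite act_unit; auto. apply shc_refl.
  - apply act_comm; auto.
Qed.

Lemma cong_sound w1 w2 : gp_cong E w1 w2 -> forall r, reduced r -> shc (phi r w1) (phi r w2).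
Proof.
  induction 1; intros r Hr.
  - unfold phi; rewrite !fold_right_app.
    apply phi_resp. apply rel_sound; auto. apply phi_red; auto.
  - apply shc_refl.
  - apply shc_sym; auto.
  - eapply shc_trans; eauto.
Qed.

Lemma phi_cong w : gp_cong E w (phi [] w).
Proof.
  induction w as [|a w IH]; simpl; [apply gp_cong_refl|].
  eapply gp_cong_trans; [apply cong_cons; exact IH|].
  apply act_cong. apply phi_red; simpl; auto.
Qed.


Definition hg (v : V) (c : M v) (o : option letter) : option letter :=
  match o with
  | Some z => match dec (exists d, mop c d = cast v z) with
              | left H => mkl v (proj1_sig (constructive_indefinite_description _ H))
              | right _ => None end
  | None => match dec (exists d, mop c d = munit (M v)) with
              | left H => mkl v (proj1_sig (constructive_indefinite_description _ H))
              | right _ => None end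
  end.

Lemma good_hg v c : goodh v (hg v c).
Proof.
  intros [z|]; simpl; destruct (dec _); simpl; auto; apply good_mkl.
Qed.

Lemma mkl_nonunit v m : m <> munit (M v) -> mkl v m = Some (existT _ v m).
Proof. intros H; unfold mkl; destruct (dec _); [contradiction|auto]. Qed.

Lemma mkl_unit v : mkl v (munit (M v)) = None.
Proof. unfold mkl; destruct (dec _) as [_|n]; [auto|contradiction n; auto]. Qed.

Lemma ginv v (c : M v) (r : word) : (forall x y, mop c x = mop c y -> x = y) -> reduced r ->
  shc (F v (hg v c) (act (existT _ v c) r)) r.
Proof.
  intros LCc Hr; unfold act; simpl.
  unfold F at 2. destruct (find v r) as [[[p z] q]|] eqn:Hf.
  - destruct (find_spec _ _ Hf) as [Hrr [Hp Hz]].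
    destruct z as [w m]; simpl in Hz; subst w.
    rewrite Hrr in Hr. destruct (reduced_mid _ _ _ Hr) as [Hn _]. unfold nonunit in Hn; simpl in Hn.
    simpl. rewrite cast_eq. unfold mkl at 1. destruct (dec (mop c m = munit (M v))) as [e|n].
    + simpl. unfold F. rewrite (@find_after_red v p q (existT _ v m) Hp eq_refl Hr).
      simpl. destruct (dec _) as [H|H]; [|exfalso; apply H; exists m; auto].
      destruct (constructive_indefinite_description _ H) as [d Hd]; simpl.
      assert (d = m) by (apply LCc; congruence). subst d.
      rewrite (@mkl_nonunit v m Hn). rewrite Hrr.
      apply (ol_pass (v:=v) (Some (existT _ v m))); simpl; auto.
    + simpl. unfold F.
      rewrite (@find_pass_Some v p _ [] _ q Hp (@find_head v (existT _ v (mop c m)) q eq_refl)).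
      simpl. rewrite app_nil_r, cast_eq.
      destruct (dec _) as [H|H]; [|exfalso; apply H; exists m; auto].
      destruct (constructive_indefinite_description _ H) as [d Hd]; simpl.
      assert (d = m) by (apply LCc; congruence). subst d.
      rewrite (@mkl_nonunit v m Hn). simpl. rewrite Hrr. apply shc_refl.
  - simpl. unfold mkl at 1. destruct (dec (c = munit (M v))) as [e|n].
    + simpl. unfold F. rewrite Hf. simpl.
      destruct (dec _) as [H|H]; [|exfalso; apply H; exists (munit (M v)); rewrite e; apply mop1l].
      destruct (constructive_indefinite_description _ H) as [d Hd]; simpl.
      rewrite e, mop1l in Hd. subst d. rewrite mkl_unit. apply shc_refl.
    + simpl. unfold F. rewrite (@find_head v (existT _ v c) r eq_refl). simpl.
      rewrite cast_eq.
      destruct (dec _) as [H|H]; [|exfalso; apply H; exists (munit (M v)); apply mop1r].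
      destruct (constructive_indefinite_description _ H) as [d Hd]; simpl.
      assert (d = munit (M v)) by (apply LCc; rewrite mop1r; auto). subst d.
      rewrite mkl_unit. apply shc_refl.
Qed.

Lemma left_cancel_letter (LC : forall v, left_cancellative (M v)) (a : letter) (x y : word) :
  gp_cong E (a :: x) (a :: y) -> gp_cong E x y.
Proof.
  intros H. destruct a as [v c].
  pose proof (cong_sound H [] I) as H1. simpl in H1.
  apply (F_resp (@good_hg v c)) in H1.
  assert (H2 : shc (phi [] x) (phi [] y)).
  { eapply shc_trans; [apply shc_sym, (@ginv v c); [|apply phi_red; simpl; auto]|].
    - intros; eapply LC; eauto.
    - eapply shc_trans; [exact H1|]. apply ginv; [intros; eapply LC; eauto|apply phi_red; simpl; auto]. }
  eapply gp_cong_trans; [apply phi_cong|].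
  eapply gp_cong_trans; [apply sh_cong; exact H2|].
  apply gp_cong_sym, phi_cong.
Qed.

Lemma left_cancel (LC : forall v, left_cancellative (M v)) (x y z : word) :
  gp_cong E (z ++ x) (z ++ y) -> gp_cong E x y.
Proof.
  induction z as [|a z IH]; simpl; auto.
  intros H; apply IH, (left_cancel_letter LC H).
Qed.

End LC.

Definition Mop {V : Type} (M : V -> monoid) (v : V) : monoid.
Proof.
  refine (@Monoid (mcar (M v)) (fun a b => mop b a) (munit (M v)) _ _ _).
  - intros a b c; symmetry; apply mopA.
  - intros; apply mop1r.
  - intros; apply mop1l.
Defined.

Lemma rev_cong1 (V : Type) (E : V -> V -> Prop) (E_sym : forall u v, E u v -> E v u)
  (M : V -> monoid) (w1 w2 : gp_word M) :
  gp_cong E w1 w2 -> @gp_cong V E (Mop M) (rev w1) (rev w2).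
Proof.
  induction 1.
  - rewrite !rev_app_distr, <- !app_assoc.
    refine (@gp_cong_base V E (Mop M) (rev s) (rev p) (rev w1) (rev w2) _). destruct H; simpl.
    + exact (gp_rel_mul E (Mop M) v b a).
    + exact (gp_rel_unit E (Mop M) v).
    + exact (gp_rel_comm E (Mop M) v u n m (E_sym _ _ H)).
  - apply gp_cong_refl.
  - apply gp_cong_sym; auto.
  - eapply gp_cong_trans; eauto.
Qed.

Lemma rev_cong2 (V : Type) (E : V -> V -> Prop) (E_sym : forall u v, E u v -> E v u)
  (M : V -> monoid) (w1 w2 : gp_word (Mop M)) :
  @gp_cong V E (Mop M) w1 w2 -> gp_cong E (rev w1 : gp_word M) (rev w2).
Proof.
  induction 1.
  - rewrite !rev_app_distr, <- !app_assoc.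
    refine (@gp_cong_base V E M (rev s) (rev p) (rev w1) (rev w2) _). destruct H; simpl.
    + exact (gp_rel_mul E M v b a).
    + exact (gp_rel_unit E M v).
    + exact (gp_rel_comm E M v u n m (E_sym _ _ H)).
  - apply gp_cong_refl.
  - apply gp_cong_sym; auto.
  - eapply gp_cong_trans; eauto.
Qed.

Theorem theorem1p5 (V : Type) (E : V -> V -> Prop)
  (E_irrefl : forall v, ~ E v v) (E_sym : forall u v, E u v -> E v u)
  (M : V -> monoid) :
  ((forall v, right_cancellative (M v)) -> gp_right_cancellative E M) /\
  ((forall v, left_cancellative (M v)) -> gp_left_cancellative E M) /\
  ((forall v, cancellative (M v)) -> gp_cancellative E M).
Proof.
  assert (R : (forall v, right_cancellative (M v)) -> gp_right_cancellative E M).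
  { intros RC x y z H.
    apply rev_cong1 in H; auto. rewrite !rev_app_distr in H.
    assert (LCop : forall v, left_cancellative (Mop M v)).
    { intros v a b c Hc. exact (RC v a b c Hc). }
    pose proof (@left_cancel V E (Mop M) E_irrefl E_sym LCop _ _ _ H) as H'.
    apply rev_cong2 in H'; auto. rewrite !rev_involutive in H'. exact H'. }
  assert (L : (forall v, left_cancellative (M v)) -> gp_left_cancellative E M).
  { intros LC x y z H. eapply left_cancel; eauto. }
  split; [exact R|split; [exact L|]].
  intros C; split; [apply L|apply R]; intros v; apply C.
Qed.
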